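(* Let $n\geq 1$, let $M$ be a message and $\phi$ a formula, and let $\heartsuit_1,\dots,\heartsuit_n$ be modal prefixes each of which is either $[M]$ or $\langle M\rangle$ (same $M$ throughout). (1) If all $\heartsuit_i$ are $[M]$, then $\vdash(\heartsuit_1\cdots\heartsuit_n\phi)\leftrightarrow[M]\phi$. (2) If at least one $\heartsuit_i$ is $\langle M\rangle$, then $\vdash(\heartsuit_1\cdots\heartsuit_n\phi)\leftrightarrow\langle M\rangle\phi$.
   Context: Fix a finite set $\mathcal{A}$ of agent names containing a distinguished name $\mathsf{CM}$. Messages: $M ::= a \mid B \mid (M,M)$ with $a\in\mathcal{A}$, $B$ optional application-specific data constants, $(M,M')$ pairs. $\mathcal{P}$ is a denumerable set of propositional variables containing atoms $\mathsf{k}_a(M)$ for all $a\in\mathcal{A}$ and messages $M$. Formulas: $\phi ::= P \mid \phi\wedge\phi \mid \phi\vee\phi \mid \neg\phi \mid \phi\to\phi \mid [M]\phi$. Abbreviations: $\mathrm{true}:=\mathsf{k}_{\mathsf{CM}}(\mathsf{CM})$, $\mathrm{false}:=\neg\mathrm{true}$, $\phi\leftrightarrow\psi:=(\phi\to\psi)\wedge(\psi\to\phi)$, $\langle M\rangle\phi:=\neg\neg(\mathsf{k}_{\mathsf{CM}}(M)\wedge\phi)$. LIiP is the smallest set of formulas that contains all instances of: the axioms of an adequate Hilbert axiomatization of intuitionistic propositional logic; $\mathsf{k}_a(a)$; $(\mathsf{k}_a(M)\wedge\mathsf{k}_a(M'))\leftrightarrow\mathsf{k}_a((M,M'))$; $[M]\mathsf{k}_{\mathsf{CM}}(M)$;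 $[M](\phi\to\psi)\to([M]\phi\to[M]\psi)$; $[M]\phi\to(\mathsf{k}_{\mathsf{CM}}(M)\to\phi)$; $[M]\phi\to\langle M\rangle\phi$; $\phi\to[M]\phi$; and is closed under modus ponens and the rule: if $\mathsf{k}_{\mathsf{CM}}(M)\to\mathsf{k}_{\mathsf{CM}}(M')$ is in the set then so is $[M']\phi\to[M]\phi$ for every $\phi$. Write $\vdash\phi$ for $\phi\in\mathrm{LIiP}$. *)

(* Defs.v *)
From mathcomp Require Import all_boot.
Set Implicit Arguments. Unset Strict Implicit. Unset Printing Implicit Defensive.

Section LIiP.
(* A : finite set of agent names, CM : distinguished agent,
   Data : application-specific data constants (possibly empty). *)
Variables (A : finType) (CM : A) (Data : Type).

Inductive msg : Type :=
| MAgent : A -> msg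
| MData : Data -> msg
| MPair : msg -> msg -> msg.

(* Propositional variables: the atoms k_a(M) together with denumerably many
   further variables. *)
Inductive pvar : Type :=
| Kn : A -> msg -> pvar
| PV : nat -> pvar.

Inductive form : Type :=
| FVar : pvar -> form
| FAnd : form -> form -> form
| FOr : form -> form -> form
| FNot : form -> form
| FImp : form -> form -> form
| FBox : msg -> form -> form.

Definition Kf (a : A) (M : msg) : form := FVar (Kn a M).
Definition FTrue : form := Kf CM (MAgent CM).
Definition FFalse : form := FNot FTrue.
Definition FIff (p q : form) : form := FAnd (FImp p q) (FImp q p).
Definition FDia (M : msg) (p : form) : form :=
  FNot (FNot (FAnd (Kf CM M) p)).

Inductive prov : form -> Prop :=
| ax_K p q : prov (FImp p (FImp q p))
| ax_S p q r : prov (FImp (FImp p (FImp q r)) (FImp (FImp p q) (FImp p r)))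
| ax_andI p q : prov (FImp p (FImp q (FAnd p q)))
| ax_andE1 p q : prov (FImp (FAnd p q) p)
| ax_andE2 p q : prov (FImp (FAnd p q) q)
| ax_orI1 p q : prov (FImp p (FOr p q))
| ax_orI2 p q : prov (FImp q (FOr p q))
| ax_orE p q r : prov (FImp (FImp p r) (FImp (FImp q r) (FImp (FOr p q) r)))
| ax_notI p q : prov (FImp (FImp p q) (FImp (FImp p (FNot q)) (FNot p)))
| ax_notE p q : prov (FImp (FNot p) (FImp p q))
| ax_kself a : prov (Kf a (MAgent a))
| ax_kpair a M M' :
    prov (FIff (FAnd (Kf a M) (Kf a M')) (Kf a (MPair M M')))
| ax_boxk M : prov (FBox M (Kf CM M))
| ax_boxK M p q : prov (FImp (FBox M (FImp p q)) (FImp (FBox M p) (FBox M q)))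
| ax_boxT M p : prov (FImp (FBox M p) (FImp (Kf CM M) p))
| ax_boxdia M p : prov (FImp (FBox M p) (FDia M p))
| ax_persist M p : prov (FImp p (FBox M p))
| r_mp p q : prov (FImp p q) -> prov p -> prov q
| r_mono M M' p :
    prov (FImp (Kf CM M) (Kf CM M')) -> prov (FImp (FBox M' p) (FBox M p)).

Inductive modality : Type := MBox | MDia.

Definition apply_mod (M : msg) (h : modality) (p : form) : form :=
  match h with MBox => FBox M p | MDia => FDia M p end.

Definition apply_prefix (M : msg) (hs : seq modality) (p : form) : form :=
  foldr (apply_mod M) p hs.

End LIiP.

Definition is_box (h : modality) : bool := if h is MBox then true else false.

(* Main.v *)
Require Import Defs.
From mathcomp Require Import all_boot.
From Stdlib Require List.

Section Proof.
Variables (A : finType) (CM : A) (Data : Type).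
Notation form := (form A Data).
Notation prov := (prov CM).
Implicit Types (p q r a b y : form) (G : list form).

Inductive der (G : list form) : form -> Prop :=
| d_ax p : prov p -> der G p
| d_hyp p : List.In p G -> der G p
| d_mp p q : der G (FImp p q) -> der G p -> der G q.
Arguments d_ax {G p}.
Arguments d_hyp {G p}.
Arguments d_mp {G p q}.
Set Implicit Arguments.

Lemma pI (p : form) : prov (FImp p p).
Proof.
have h1 := ax_S CM p (FImp p p) p.
have h2 := ax_K CM p (FImp p p).
have h3 := ax_K CM p p.
exact: r_mp (r_mp h1 h2) h3.
Qed.

Lemma ded G a b : der (a :: G) b -> der G (FImp a b).
Proof.
move=> H; induction H as [p Hp|p Hin|p q _ IH1 _ IH2].
- exact: d_mp (d_ax (ax_K CM p a)) (d_ax Hp).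
- case: Hin => [<-|Hin]; first exact: d_ax (pI _).
  exact: d_mp (d_ax (ax_K CM p a)) (d_hyp Hin).
- exact: d_mp (d_mp (d_ax (ax_S _ _ _ _)) IH1) IH2.
Qed.

Lemma der0 p : der nil p -> prov p.
Proof. move=> H; induction H as [|q []|q r _ H1 _ H2]; [by []|exact: r_mp H1 H2]. Qed.

Lemma pi a b : der (a :: nil) b -> prov (FImp a b).
Proof. by move/ded/der0. Qed.

Lemma weak G a p : der G p -> der (a :: G) p.
Proof.
move=> H; induction H as [q Hq|q Hq|q r _ H1 _ H2]; [exact: d_ax|apply: d_hyp; by right|exact: d_mp H1 H2].
Qed.

Lemma h0 G a : der (a :: G) a.
Proof. by apply: d_hyp; left. Qed.

Lemma dand G p q : der G p -> der G q -> der G (FAnd p q).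
Proof. move=> H1 H2; exact: d_mp (d_mp (d_ax (ax_andI _ _ _)) H1) H2. Qed.
Lemma dandl G p q : der G (FAnd p q) -> der G p.
Proof. move=> H; exact: d_mp (d_ax (ax_andE1 _ _ _)) H. Qed.
Lemma dandr G p q : der G (FAnd p q) -> der G q.
Proof. move=> H; exact: d_mp (d_ax (ax_andE2 _ _ _)) H. Qed.
Lemma dnotI G p q : der (p :: G) q -> der (p :: G) (FNot q) -> der G (FNot p).
Proof. move=> /ded H1 /ded H2; exact: d_mp (d_mp (d_ax (ax_notI _ _ _)) H1) H2. Qed.
Lemma dnotE G p q : der G (FNot p) -> der G p -> der G q.
Proof. move=> H1 H2; exact: d_mp (d_mp (d_ax (ax_notE _ _ q)) H1) H2. Qed.

Lemma dn_mono a b : prov (FImp a b) -> prov (FImp (FNot (FNot a)) (FNot (FNot b))).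
Proof.
move=> Hab; apply: pi.
apply: (@dnotI _ _ (FNot a)).
- apply: (@dnotI _ _ b).
  + exact: d_mp (d_ax Hab) (h0 _ _).
  + exact: weak (h0 _ _).
- exact: weak (h0 _ _).
Qed.

Lemma dn_intro a : prov (FImp a (FNot (FNot a))).
Proof.
apply: pi; apply: (@dnotI _ _ a); [exact: weak (h0 _ _)|exact: h0].
Qed.

Lemma tneg y : prov (FImp (FNot (FNot (FNot y))) (FNot y)).
Proof.
apply: pi; apply: (@dnotI _ _ (FNot (FNot y))).
- apply: d_mp (d_ax (dn_intro y)) (h0 _ _).
- exact: weak (h0 _ _).
Qed.

Lemma iffI p q : prov (FImp p q) -> prov (FImp q p) -> prov (FIff p q).
Proof. move=> H1 H2; exact: r_mp (r_mp (ax_andI _ _ _) H1) H2. Qed.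
Lemma iffl p q : prov (FIff p q) -> prov (FImp p q).
Proof. move=> H; exact: r_mp (ax_andE1 _ _ _) H. Qed.
Lemma iffr p q : prov (FIff p q) -> prov (FImp q p).
Proof. move=> H; exact: r_mp (ax_andE2 _ _ _) H. Qed.
Lemma imp_trans p q r : prov (FImp p q) -> prov (FImp q r) -> prov (FImp p r).
Proof.
move=> H1 H2; apply: pi; exact: d_mp (d_ax H2) (d_mp (d_ax H1) (h0 _ _)).
Qed.
Lemma iff_trans p q r : prov (FIff p q) -> prov (FIff q r) -> prov (FIff p r).
Proof.
move=> H1 H2; apply: iffI; [exact: imp_trans (iffl H1) (iffl H2)|exact: imp_trans (iffr H2) (iffr H1)].
Qed.
Lemma iff_refl p : prov (FIff p p).
Proof. exact: iffI (pI _) (pI _). Qed.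

Lemma nec M p : prov p -> prov (FBox M p).
Proof. move=> H; exact: r_mp (ax_persist _ _ _) H. Qed.
Lemma box_mono M p q : prov (FImp p q) -> prov (FImp (FBox M p) (FBox M q)).
Proof. move=> H; exact: r_mp (ax_boxK _ _ _ _) (nec M H). Qed.
Lemma dia_mono M p q : prov (FImp p q) -> prov (FImp (FDia CM M p) (FDia CM M q)).
Proof.
move=> H; apply: dn_mono; apply: pi; apply: dand.
- exact: dandl (h0 _ _).
- exact: d_mp (d_ax H) (dandr (h0 _ _)).
Qed.

Lemma mod_cong M h p q : prov (FIff p q) ->
  prov (FIff (apply_mod CM M h p) (apply_mod CM M h q)).
Proof.
move=> H; case: h => /=; apply: iffI.
- exact: box_mono (iffl H).
- exact: box_mono (iffr H).
- exact: dia_mono (iffl H).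
- exact: dia_mono (iffr H).
Qed.

Lemma boxbox M p : prov (FIff (FBox M (FBox M p)) (FBox M p)).
Proof.
apply: iffI; last exact: ax_persist.
have H1 := box_mono M (ax_boxT CM M p).
apply: pi; exact: (d_mp (d_mp (d_ax (ax_boxK CM M (Kf CM M) p)) (d_mp (d_ax H1) (h0 _ _))) (d_ax (ax_boxk CM M))).
Qed.

Lemma diadia M p : prov (FIff (FDia CM M (FDia CM M p)) (FDia CM M p)).
Proof.
apply: iffI.
- apply: imp_trans (tneg _).
  apply: dn_mono; apply: pi; exact: dandr (h0 _ _).
- apply: dn_mono; apply: pi; apply: dand; first exact: dandl (h0 _ _).
  exact: d_mp (d_ax (dn_intro _)) (h0 _ _).
Qed.

Lemma boxdia M p : prov (FIff (FBox M (FDia CM M p)) (FDia CM M p)).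
Proof.
apply: iffI; last exact: ax_persist.
exact: imp_trans (ax_boxdia _ _ _) (iffl (diadia M p)).
Qed.

Lemma diabox M p : prov (FIff (FDia CM M (FBox M p)) (FDia CM M p)).
Proof.
apply: iffI; apply: dn_mono; apply: pi; apply: dand; try exact: dandl (h0 _ _).
- exact: d_mp (d_mp (d_ax (ax_boxT _ _ _)) (dandr (h0 _ _))) (dandl (h0 _ _)).
- exact: d_mp (d_ax (ax_persist _ _ _)) (dandr (h0 _ _)).
Qed.

End Proof.

Theorem corollary3 (A : finType) (CM : A) (Data : Type)
  (M : msg A Data) (phi : form A Data) (hs : seq modality) :
  hs <> [::] ->
  (all is_box hs ->
     prov CM (FIff (apply_prefix CM M hs phi) (FBox M phi))) /\
  (~~ all is_box hs ->
     prov CM (FIff (apply_prefix CM M hs phi) (FDia CM M phi))).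
Proof.
elim: hs => [//|h hs IH] _.
case: hs IH => [|h' hs] IH.
  by case: h => /=; split=> // _; apply: iff_refl.
have {IH} [IH1 IH2] := IH ltac:(by []).
rewrite /apply_prefix /= -/(apply_prefix CM M (h' :: hs) phi).
set P := apply_prefix CM M (h' :: hs) phi.
case: h => /=; split => Hb.
- apply: iff_trans (mod_cong M MBox (IH1 Hb)) _; exact: boxbox.
- apply: iff_trans (mod_cong M MBox (IH2 Hb)) _; exact: boxdia.
- by [].
- case Ha: (all is_box (h' :: hs)).
  + apply: iff_trans (mod_cong M MDia (IH1 Ha)) _; exact: diabox.
  + apply: iff_trans (mod_cong M MDia (IH2 (negbT Ha))) _; exact: diadia.
Qed.
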